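(* If a graph $G$ with $n\ge 2$ vertices contains a matching pair $(M_1,M_2)$ of size $X=|M_1|+|M_2|$, then the $(1,2)$-TSP cost of $G$ is at most $2n-\tfrac{3}{4}X$.
   Context: A matching pair of $G$ is a pair $(M_1,M_2)$ of edge-disjoint matchings of $G$; its size is $|M_1|+|M_2|$. The $(1,2)$-TSP cost of a graph $G=(V,E)$ on $n$ vertices is $\min\sum_{i=1}^n D(v_i,v_{i+1})$ over cyclic orderings $(v_1,\dots,v_n)$ of $V$ ($v_{n+1}=v_1$), where $D(u,v)=1$ if $uv\in E$ and $D(u,v)=2$ otherwise. *)

(* Defs.v *)
From mathcomp Require Import all_boot.
Set Implicit Arguments. Unset Strict Implicit. Unset Printing Implicit Defensive.

(* A simple graph: vertex set T (finite), adjacency e : rel T, assumed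
   symmetric and irreflexive in the theorem. Edges are 2-element vertex sets. *)
Definition edges (T : finType) (e : rel T) : {set {set T}} :=
  [set A : {set T} | [exists x, exists y, e x y && (A == [set x; y])]].

Definition is_matching (T : finType) (e : rel T) (M : {set {set T}}) : Prop :=
  M \subset edges e /\
  (forall A B, A \in M -> B \in M -> A != B -> [disjoint A & B]).

Definition matching_pair (T : finType) (e : rel T) (M1 M2 : {set {set T}}) : Prop :=
  is_matching e M1 /\ is_matching e M2 /\ M1 :&: M2 = set0.

Definition D12 (T : finType) (e : rel T) (x y : T) : nat := if e x y then 1 else 2.

(* cost of the cyclic ordering given by the sequence s = (v_1,...,v_n):
   sum of D(v_i, v_{i+1}) with v_{n+1} = v_1 *)
Definition tour_cost (T : finType) (e : rel T) (s : seq T) : nat :=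
  \sum_(p <- zip s (rot 1 s)) D12 e p.1 p.2.

(* (1,2)-TSP cost: minimum of tour_cost over all orderings of the vertex set.
   The initial value 2*#|T| is an upper bound on every tour cost, so it does
   not affect the minimum. *)
Definition tsp12_cost (T : finType) (e : rel T) : nat :=
  \big[minn/(2 * #|T|)%N]_(s <- permutations (enum T)) tour_cost e s.

(* Main.v *)
Require Import Defs.
From mathcomp Require Import all_boot zify.
Set Implicit Arguments. Unset Strict Implicit. Unset Printing Implicit Defensive.

Lemma pair_eq (T : finType) (a b x y : T) :
  [set a; b] = [set x; y] -> (a = x /\ b = y) \/ (a = y /\ b = x).
Proof.
move=> E.
have ha : a \in [set x; y] by rewrite -E !inE eqxx.
have hb : b \in [set x; y] by rewrite -E !inE eqxx orbT.
have hx : x \in [set a; b] by rewrite E !inE eqxx.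
have hy : y \in [set a; b] by rewrite E !inE eqxx orbT.
move: ha hb hx hy; rewrite !inE => /orP[]/eqP-> /orP[]/eqP-> /orP[]/eqP hx /orP[]/eqP hy;
  subst; auto.
Qed.

Definition fF (T : finType) (M1 M2 : {set {set T}}) (x y : T) : bool :=
  [set x; y] \in M1 :|: M2.

Lemma in_edges (T : finType) (e : rel T) (A : {set T}) :
  A \in edges e -> exists x y, e x y /\ A = [set x; y].
Proof.
rewrite inE => /existsP[x /existsP[y /andP[h /eqP->]]]; by exists x, y.
Qed.

Lemma pair_edge (T : finType) (e : rel T) (a b : T) :
  symmetric e -> [set a; b] \in edges e -> e a b.
Proof.
move=> es /in_edges[x [y [h /pair_eq[[->->]|[->->]]]]] //; by rewrite es.
Qed.

Lemma edge_neq (T : finType) (e : rel T) (a b : T) :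
  symmetric e -> irreflexive e -> [set a; b] \in edges e -> a != b.
Proof.
move=> es ei /(pair_edge es); apply: contraTneq => ->; by rewrite ei.
Qed.

Lemma clash (T : finType) (e : rel T) (M : {set {set T}}) (x y z : T) :
  symmetric e -> irreflexive e -> is_matching e M ->
  [set x; y] \in M -> [set x; z] \in M -> y = z.
Proof.
move=> es ei [sub dis] h1 h2.
have ne1 := edge_neq es ei (subsetP sub _ h1).
case: (eqVneq [set x; y] [set x; z]) => [E|E].
  move: (pair_eq E) => [[_ ->]//|[exz eyx]]. by rewrite eyx exz in ne1 *; rewrite eqxx in ne1.
have := disjointFr (dis _ _ h1 h2 E) (x:=x). by rewrite !inE !eqxx => /(_ isT).
Qed.

Definition Hyp (T : finType) (e : rel T) (M1 M2 : {set {set T}}) :=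
  [/\ symmetric e, irreflexive e, is_matching e M1 & is_matching e M2].

Lemma F_edge (T : finType) (e : rel T) (M1 M2 : {set {set T}}) A :
  Hyp e M1 M2 -> A \in M1 :|: M2 -> A \in edges e.
Proof.
case=> _ _ [s1 _] [s2 _]; rewrite inE => /orP[] h; [exact: subsetP s1 _ h|exact: subsetP s2 _ h].
Qed.

Lemma f_sym (T : finType) (M1 M2 : {set {set T}}) x y : fF M1 M2 x y = fF M1 M2 y x.
Proof. by rewrite /fF setUC. Qed.

Lemma f_neq (T : finType) (e : rel T) (M1 M2 : {set {set T}}) x y :
  Hyp e M1 M2 -> fF M1 M2 x y -> x != y.
Proof.
move=> h hf; have := F_edge h hf; case: h => es ei _ _; exact: edge_neq.
Qed.

Lemma f_clash1 (T : finType) (e : rel T) (M : {set {set T}}) x :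
  symmetric e -> irreflexive e -> is_matching e M ->
  #|[set u | [set x; u] \in M]| <= 1.
Proof.
move=> es ei hm; apply/card_le1_eqP => y z; rewrite !inE => hy hz.
by rewrite (clash es ei hm hy hz).
Qed.

Definition NN (T : finType) (M1 M2 : {set {set T}}) (S : {set T}) v :=
  [set u in S | fF M1 M2 v u].

Lemma deg_le2 (T : finType) (e : rel T) (M1 M2 : {set {set T}}) (S : {set T}) v :
  Hyp e M1 M2 -> #|NN M1 M2 S v| <= 2.
Proof.
rewrite /NN.
case=> es ei h1 h2.
apply: (@leq_trans #|[set u | [set v; u] \in M1] :|: [set u | [set v; u] \in M2]|).
  apply: subset_leq_card; apply/subsetP => u; rewrite !inE /fF inE => /andP[_ ->] //.
rewrite cardsU; apply: leq_trans (leq_subr _ _) _.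
have := f_clash1 v es ei h1; have := f_clash1 v es ei h2; lia.
Qed.

Lemma triangle (T : finType) (e : rel T) (M1 M2 : {set {set T}}) a b c :
  Hyp e M1 M2 -> fF M1 M2 a b -> fF M1 M2 a c -> fF M1 M2 b c -> False.
Proof.
move=> h hab hac hbc.
have nab := f_neq h hab; have nac := f_neq h hac; have nbc := f_neq h hbc.
case: h => es ei h1 h2.
move: hab hac hbc; rewrite /fF !inE.
have K : forall M, is_matching e M -> forall x y z, [set x; y] \in M -> [set x; z] \in M -> y = z.
  by move=> M hm x y z hy hz; exact: (clash es ei hm hy hz).
have sw : forall (x y : T), [set x; y] = [set y; x] by move=> x y; rewrite setUC.
move=> /orP[] Hab /orP[] Hac /orP[] Hbc.
all: first [ by move: nbc; rewrite (K _ h1 _ _ _ Hab Hac) eqxx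
           | by move: nbc; rewrite (K _ h2 _ _ _ Hab Hac) eqxx
           | rewrite sw in Hab; by move: nac; rewrite (K _ h1 _ _ _ Hab Hbc) eqxx
           | rewrite sw in Hab; by move: nac; rewrite (K _ h2 _ _ _ Hab Hbc) eqxx
           | rewrite sw in Hac; rewrite sw in Hbc; by move: nab; rewrite (K _ h1 _ _ _ Hac Hbc) eqxx
           | rewrite sw in Hac; rewrite sw in Hbc; by move: nab; rewrite (K _ h2 _ _ _ Hac Hbc) eqxx ].
Qed.

Definition XX (T : finType) (M1 M2 : {set {set T}}) (S : {set T}) :=
  #|[set A in M1 :|: M2 | A \subset S]|.

Lemma X_del (T : finType) (e : rel T) (M1 M2 : {set {set T}}) (S : {set T}) v :
  Hyp e M1 M2 -> v \in S -> XX M1 M2 S <= XX M1 M2 (S :\ v) + #|NN M1 M2 S v|.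
Proof.
move=> h vS; rewrite /XX.
apply: (@leq_trans #|[set A in M1 :|: M2 | A \subset S :\ v] :|:
                     [set [set v; u] | u in NN M1 M2 S v]|).
  apply: subset_leq_card; apply/subsetP => A; rewrite inE => /andP[AF AS]; rewrite in_setU.
  case vA: (v \in A).
    have [x [y [_ EA]]] := in_edges (F_edge h AF).
    apply/orP; right; apply/imsetP.
    move: vA AS AF; rewrite EA => + /subsetP AS AF; rewrite !inE => /orP[]/eqP E; [subst x|subst y].
      exists y => //; rewrite inE /fF AF andbT; apply: AS; by rewrite !inE eqxx orbT.
    exists x; last by rewrite setUC.
    rewrite inE /fF setUC AF andbT; apply: AS; by rewrite !inE eqxx.
  apply/orP; left; rewrite inE AF /=; apply/subsetP => z zA.
  rewrite !inE (subsetP AS _ zA) andbT; apply: contraFneq vA => <-; done.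
rewrite cardsU; apply: leq_trans (leq_subr _ _) _.
by rewrite leq_add2l leq_imset_card.
Qed.

Lemma N_del (T : finType) (M1 M2 : {set {set T}}) (S : {set T}) v u :
  v \in NN M1 M2 S u -> #|NN M1 M2 (S :\ v) u| + 1 = #|NN M1 M2 S u|.
Proof.
move=> vN; rewrite (cardsD1 v (NN M1 M2 S u)) vN addnC; congr (_ + _).
apply: eq_card => z; rewrite !inE; by case: (z == v).
Qed.

Lemma X0 (T : finType) (e : rel T) (M1 M2 : {set {set T}}) :
  Hyp e M1 M2 -> XX M1 M2 set0 = 0.
Proof.
move=> h; apply/eqP; rewrite cards_eq0; apply/eqP/setP => A; rewrite inE [in RHS]inE.
apply/negbTE; apply/negP => /andP[AF As].
have [x [y [_ EA]]] := in_edges (F_edge h AF).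
by move: (subsetP As x); rewrite EA !inE eqxx => /(_ isT).
Qed.

Fixpoint adj (T : Type) (f : T -> T -> bool) (s : seq T) : nat :=
  match s with x :: ((y :: _) as t) => f x y + adj f t | _ => 0 end.

Lemma adj_cons (T : Type) (f : T -> T -> bool) x s : adj f s <= adj f (x :: s).
Proof. case: s => [|y t] //=; exact: leq_addl. Qed.

Definition goodA (T : finType) (M1 M2 : {set {set T}}) (S : {set T}) :=
  exists s : seq T, [/\ uniq s, forall x, (x \in s) = (x \in S) &
     3 * XX M1 M2 S <= 4 * adj (fF M1 M2) s].

Definition goodB (T : finType) (M1 M2 : {set {set T}}) (S : {set T}) v k :=
  exists t : seq T, [/\ uniq (v :: t), forall x, (x \in v :: t) = (x \in S) &
     3 * XX M1 M2 S + k <= 4 * adj (fF M1 M2) (v :: t)].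

Lemma adj2 (T : Type) (f : T -> T -> bool) x y t : adj f (x :: y :: t) = f x y + adj f (y :: t).
Proof. by []. Qed.

Lemma card_del (T : finType) (S : {set T}) v : v \in S -> #|S :\ v| + 1 = #|S|.
Proof. by move=> vS; rewrite (cardsD1 v S) vS addnC. Qed.

Lemma main (T : finType) (e : rel T) (M1 M2 : {set {set T}}) (h : Hyp e M1 M2) n :
  forall S : {set T}, #|S| <= n ->
  [/\ goodA M1 M2 S,
      forall v, v \in S -> #|NN M1 M2 S v| <= 1 -> goodB M1 M2 S v 0 &
      forall v u w, v \in S -> #|NN M1 M2 S v| <= 1 -> u \in NN M1 M2 S v ->
        w \in NN M1 M2 S u -> w != v -> goodB M1 M2 S v 2].
Proof.
elim: n => [|n IH] S hS.
  have S0 : S = set0 by apply/eqP; rewrite -cards_eq0 -leqn0.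
  split; last 2 first.
  - by move=> v; rewrite S0 inE.
  - by move=> v u w; rewrite S0 inE.
  exists [::]; split => //; first by move=> x; rewrite S0 inE.
  by rewrite S0 (X0 h).
have hB : forall v, v \in S -> #|NN M1 M2 S v| <= 1 -> goodB M1 M2 S v 0.
  move=> v vS dv.
  have hS1 : #|S :\ v| <= n by have := card_del vS; lia.
  have [A1 B1 _] := IH _ hS1.
  move: dv; rewrite leq_eqVlt ltnS leqn0 => /orP[d1|/eqP d0].
    move/cards1P: (d1) => [u Nu].
    have : u \in NN M1 M2 S v by rewrite Nu set11.
    rewrite inE => /andP[uS fvu].
    have nvu := f_neq h fvu.
    have uS1 : u \in S :\ v by rewrite !inE uS andbT eq_sym.
    have vNu : v \in NN M1 M2 S u by rewrite inE vS f_sym fvu.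
    have du := N_del vNu; have := deg_le2 S u h.
    move=> d2; have du1 : #|NN M1 M2 (S :\ v) u| <= 1 by lia.
    have [t [ut mt ht]] := B1 u uS1 du1.
    exists (u :: t); split.
    - by rewrite cons_uniq ut andbT mt !inE eqxx.
    - move=> x; rewrite in_cons mt !inE; by case: (eqVneq x v) => [->|].
    - rewrite adj2 fvu; have := X_del h vS; move/eqP: d1 => d1; rewrite d1; lia.
  have [s [us ms hs]] := A1.
  exists s; split.
  - by rewrite cons_uniq us andbT ms !inE eqxx.
  - move=> x; rewrite in_cons ms !inE; by case: (eqVneq x v) => [->|].
  - have := X_del h vS; rewrite d0 addn0; have := adj_cons (fF M1 M2) v s; lia.
have hC : forall v u w, v \in S -> #|NN M1 M2 S v| <= 1 -> u \in NN M1 M2 S v ->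
        w \in NN M1 M2 S u -> w != v -> goodB M1 M2 S v 2.
  move=> v u w vS dv uN wN wv.
  move: (uN) (wN); rewrite !inE => /andP[uS fvu] /andP[wS fuw].
  have nvu := f_neq h fvu; have nuw := f_neq h fuw.
  have uS1 : u \in S :\ v by rewrite !inE uS andbT eq_sym.
  have wS2 : w \in (S :\ v) :\ u by rewrite !inE wS wv andbT eq_sym nuw.
  have vNu : v \in NN M1 M2 S u by rewrite inE vS f_sym fvu.
  have uNw : u \in NN M1 M2 (S :\ v) w by rewrite inE uS1 f_sym fuw.
  have e1 := N_del vNu; have e2 := N_del uNw.
  have g1 := deg_le2 S u h; have g2 := deg_le2 (S :\ v) w h.
  have c1 := card_del vS; have c2 := card_del uS1.
  have hS2 : #|(S :\ v) :\ u| <= n by move: c1 c2 hS; clear; lia.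
  have [_ B2 _] := IH _ hS2.
  have [t [ut mt ht]] := B2 w wS2 ltac:(move: e2 g2; clear; lia).
  exists (u :: w :: t); split.
  - rewrite cons_uniq [uniq (u :: _)]cons_uniq ut andbT in_cons negb_or nvu /=.
    by rewrite !mt !inE !eqxx /= andbF.
  - move=> x; rewrite 2!in_cons mt !inE.
    case: (eqVneq x v) => [->|xv] /=; first by rewrite vS.

    by case: (eqVneq x u) => [->|xu] //=; rewrite uS.
  - rewrite !adj2 fvu fuw.
    have x1 := X_del h vS; have x2 := X_del h uS1.
    move: x1 x2 ht dv e1 g1; clear; lia.
split => //.
case: (boolP [exists v in S, #|NN M1 M2 S v| <= 1]).
  move/exists_inP => [v vS dv]; have [t [ut mt ht]] := hB v vS dv.
  exists (v :: t); split => //; move: ht; clear; lia.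
move/exists_inPn => allg.
case: (set_0Vmem S) => [S0|[w wS]].
  exists [::]; split => //; first by move=> x; rewrite S0 inE.
  by rewrite S0 (X0 h).
have dw : 1 < #|NN M1 M2 S w| by rewrite ltnNge; exact: allg.
have [a aN] : exists a, a \in NN M1 M2 S w by apply/card_gt0P; move: dw; clear; lia.
move: (aN); rewrite inE => /andP[aS fwa].
have nwa := f_neq h fwa.
have aS1 : a \in S :\ w by rewrite !inE aS andbT eq_sym.
have wNa : w \in NN M1 M2 S a by rewrite inE wS f_sym fwa.
have da : 1 < #|NN M1 M2 S a| by rewrite ltnNge; exact: allg.
have ea := N_del wNa; have ga := deg_le2 S a h.
have : #|NN M1 M2 (S :\ w) a| == 1 by apply/eqP; move: ea ga da; clear; lia.
move/cards1P => [a' Na'].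
have a'N : a' \in NN M1 M2 (S :\ w) a by rewrite Na' set11.
move: (a'N); rewrite !inE => /andP[/andP[a'w a'S] faa'].
have aNa' : a \in NN M1 M2 S a' by rewrite inE aS f_sym faa'.
have da' : 1 < #|NN M1 M2 S a'| by rewrite ltnNge; exact: allg.
have : 0 < #|NN M1 M2 S a' :\ a| by have := cardsD1 a (NN M1 M2 S a'); rewrite aNa'; move: da'; clear; lia.
move/card_gt0P => [c]; rewrite !inE => /andP[ca /andP[cS fa'c]].
have cw : c != w.
  apply/eqP => Ec; subst c.
  apply: (triangle h fwa _ faa'); by rewrite f_sym.
have cS1 : c \in S :\ w by rewrite !inE cw cS.
have cN : c \in NN M1 M2 (S :\ w) a' by rewrite inE cS1 fa'c.
have c1 := card_del wS.
have hS1 : #|S :\ w| <= n by move: c1 hS; clear; lia.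
have [_ _ C1] := IH _ hS1.
have [t [ut mt ht]] := C1 a a' c aS1 ltac:(rewrite Na' cards1 //) a'N cN ca.
exists (w :: a :: t); split.
- by rewrite cons_uniq ut andbT mt !inE eqxx.
- move=> x; rewrite in_cons mt !inE; by case: (eqVneq x w) => [->|].
- rewrite adj2 fwa; have := X_del h wS; have := deg_le2 S w h; move: ht; clear; lia.
Qed.

Lemma tour_g (T : finType) (e : rel T) (M1 M2 : {set {set T}}) (h : Hyp e M1 M2) z t :
  forall x, \sum_(p <- zip (x :: t) (rcons t z)) D12 e p.1 p.2 + adj (fF M1 M2) (x :: t)
    <= 2 * (size t).+1.
Proof.
elim: t => [|y t IH] x.
  rewrite /= big_cons big_nil /D12 /=; by case: ifP.
rewrite rcons_cons [zip _ _]/= big_cons adj2 [size _]/=.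
change (D12 e (x, y).1 (x, y).2) with (D12 e x y).
have := IH y.
have : D12 e x y + fF M1 M2 x y <= 2.
  rewrite /D12; case fxy: (fF M1 M2 x y); last by case: ifP.
  case: (h) => es _ _ _.
  by rewrite (pair_edge es (F_edge h fxy)).
lia.
Qed.

Lemma bigmin_le (T : eqType) (r : seq T) (F : T -> nat) x0 j :
  j \in r -> \big[minn/x0]_(i <- r) F i <= F j.
Proof.
elim: r => [|a r IH] //; rewrite in_cons big_cons => /orP[/eqP ->|jr].
  exact: geq_minl.
apply: leq_trans (geq_minr _ _) (IH jr).
Qed.

Theorem mainTheorem16 (T : finType) (e : rel T) (M1 M2 : {set {set T}}) :
  symmetric e -> irreflexive e -> 2 <= #|T| ->
  matching_pair e M1 M2 ->
  4 * tsp12_cost e + 3 * (#|M1| + #|M2|) <= 8 * #|T|.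
Proof.
move=> es ei n2 [m1 [m2 dis]].
have h : Hyp e M1 M2 by split.
have [[s [us ms hs]] _ _] := main h (leqnn #|[set: T]|).
have XT : XX M1 M2 [set: T] = #|M1| + #|M2|.
  rewrite /XX -cardsUI dis cards0 addn0; apply: eq_card => A.
  by rewrite inE subsetT andbT.
rewrite XT in hs.
have ps : perm_eq s (enum T).
  apply: uniq_perm => //; first exact: enum_uniq.
  by move=> x; rewrite ms mem_enum !inE.
have sz : size s = #|T| by rewrite (perm_size ps) cardE.
have le1 : tsp12_cost e <= tour_cost e s.
  by apply: bigmin_le; rewrite mem_permutations.
case: s us ms hs ps sz le1 => [|x t] us ms hs ps sz le1.
  have [x0 _] : exists x : T, x \in [set: T] by apply/card_gt0P; rewrite cardsT; lia.
  by move: (ms x0); rewrite in_setT.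
have tg := tour_g h x t x.
have : tour_cost e (x :: t) = \sum_(p <- zip (x :: t) (rcons t x)) D12 e p.1 p.2.
  by rewrite /tour_cost rot1_cons.
move=> tc; rewrite tc in le1.
move: tg le1 hs sz; rewrite /=; clear; lia.
Qed.
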